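(* Let $n\geqslant 3$, let $S$ be a caterpillar species tree with canonical label vector $(s_1,\dots,s_n)$, and let $k_s,k_\ell\in\{1,\dots,n\}$ with $k_s<k_\ell$ and $k_\ell\neq 2$. Let $G$ be the caterpillar gene tree with canonical label vector $(g_1,\dots,g_n)$ given by $g_{k_s}=s_{k_\ell}$, $g_k=s_{k-1}$ for $k_s<k\leqslant k_\ell$, and $g_k=s_k$ for $k\notin\{k_s,\dots,k_\ell\}$ (a forward incrementation of $S$ on the component $k_s,\dots,k_\ell$). Writing $\delta=\delta_{k_s,1}$ (equal to $1$ if $k_s=1$ and $0$ otherwise), the number of coalescent histories for $(G,S)$ equals $$\sum_{c=0}^{\min(k_s-2+\delta,\ n-k_\ell)} D(k_\ell-1+c,\ k_s-2+\delta-c)\; D_{k_\ell-k_s-\delta+2+2c}\big(n-k_\ell-c,\ n-k_s+1-\delta+c\big).$$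
   Context: All trees are binary, rooted, leaf-labeled. A caterpillar tree with $n$ leaves is one in which some internal node is descended from all other internal nodes. Its canonical label vector $(x_1,\dots,x_n)$ has $x_1,x_2$ the labels of the two cherry leaves and, for $3\leqslant i\leqslant n$, $x_i$ the label of the leaf separated from the root by $n-i+1$ edges. Internal nodes are numbered $1,\dots,n-1$ from cherry to root; internal edge $i$ is the edge above node $i$, with an extra edge $n-1$ above the root. A coalescent history for $(G,S)$ is a map $h$ from internal nodes of $G$ to internal edges of $S$ such that (1) every label of a leaf below node $v$ of $G$ labels a leaf of $S$ below edge $h(v)$, and (2) if $v_2$ is descended from $v_1$ in $G$ then $h(v_2)$ is descended from $h(v_1)$ (objects are descended from themselves). Catalan's triangle: $D(a,b)=1$ if $b=0$, $D(a,b)=\binom{a+b}{b}-\binom{a+b}{b-1}$ if $1\leqslant b\leqslant a$, and $D(a,b)=0$ if $b>a$ (the number of monotonic lattice paths from $(0,0)$ to $(a,b)$ with steps $(1,0),(0,1)$ never going above $y=x$). Catalan's trapezoid of order $m\geqslant1$: $D_m(a,b)=\binom{a+b}{b}$ if $0\leqslant b<m$, $D_m(a,b)=\binom{a+b}{b}-\binom{a+b}{b-m}$ if $m\leqslant b\leqslant a+m-1$, and $D_m(a,b)=0$ if $b>a+m-1$ (the number of such paths from $(0,0)$ to $(a,b)$ never going above $y=x+m-1$). *)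

(* Defs.v *)
From mathcomp Require Import all_boot.


(* Caterpillar trees with n leaves are encoded by their canonical label vector
   x : nat -> nat, read at indices 1..n (x_1, x_2 cherry labels; x_i for i>=3
   the leaf at distance n-i+1 from the root).
   Internal node v (1 <= v <= n-1, numbered from cherry to root) has as leaf
   descendants exactly x_1, ..., x_{v+1}; node v2 is a descendant of node v1
   iff v2 <= v1.  Internal edge i (1 <= i <= n-1) is the edge above node i
   (edge n-1 being the extra edge above the root); the leaves below edge i
   are x_1, ..., x_{i+1}, and edge i2 is descended from edge i1 iff i2 <= i1. *)

Definition leaves_below (x : nat -> nat) (v : nat) : seq nat :=
  [seq x i | i <- iota 1 v.+1].

(* A coalescent history is a map h from internal nodes of G to internal edges
   of S.  Nodes/edges 1..n-1 are represented by ordinals 'I_(n-1) shifted by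
   one (ordinal j stands for node/edge j+1). *)
Definition is_coal_history (n : nat) (g s : nat -> nat)
    (h : {ffun 'I_n.-1 -> 'I_n.-1}) : bool :=
  [forall v : 'I_n.-1,
      all (fun a => a \in leaves_below s (h v).+1) (leaves_below g v.+1)]
  && [forall v1 : 'I_n.-1, forall v2 : 'I_n.-1,
        (v2 <= v1) ==> (h v2 <= h v1)].

Definition num_coal_histories (n : nat) (g s : nat -> nat) : nat :=
  #|[pred h : {ffun 'I_n.-1 -> 'I_n.-1} | is_coal_history n g s h]|.

Definition Dtri (a b : nat) : nat :=
  if b == 0 then 1
  else if b <= a then 'C(a + b, b) - 'C(a + b, b.-1)
  else 0.

Definition Dtrap (m a b : nat) : nat :=
  if b < m then 'C(a + b, b)
  else if b <= a + m - 1 then 'C(a + b, b) - 'C(a + b, b - m)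
  else 0.

Definition fwd_incr (s : nat -> nat) (ks kl : nat) : nat -> nat :=
  fun k => if k == ks then s kl
           else if (ks < k) && (k <= kl) then s k.-1
           else s k.

(* Main.v *)
Require Import Defs.
From mathcomp Require Import all_boot zify.

Fixpoint allseqs (L B : nat) : seq (seq nat) :=
  if L is L'.+1 then flatten [seq [seq t :: s | s <- allseqs L' B] | t <- iota 0 B]
  else [:: [::]].

Fixpoint okf (lo : nat -> nat) (t : nat) (s : seq nat) : bool :=
  if s is x :: s' then [&& t <= x, lo 0 <= x & okf (fun i => lo i.+1) x s'] else true.

Lemma count_flat_cons (P : pred (seq nat)) (ts : seq nat) S :
  count P (flatten [seq [seq t :: s | s <- S] | t <- ts]) =
  \sum_(t <- ts) count (fun s => P (t :: s)) S.
Proof.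
elim: ts => [|t ts IH]; first by rewrite big_nil.
by rewrite /= count_cat IH big_cons count_map.
Qed.

Lemma count_allseqsS (P : pred (seq nat)) L B :
  count P (allseqs L.+1 B) = \sum_(0 <= t < B) count (fun s => P (t :: s)) (allseqs L B).
Proof. by rewrite /= count_flat_cons /index_iota subn0. Qed.

Lemma okf_ext lo lo' t s : (forall i, lo i = lo' i) -> okf lo t s = okf lo' t s.
Proof.
elim: s lo lo' t => [//|x s IH] lo lo' t H /=.
by rewrite H (IH _ (fun i => lo' i.+1)).
Qed.

Lemma count_okfS lo t b B :
  count (okf lo t) (allseqs b.+1 B) =
  \sum_(0 <= v < B) ((t <= v) && (lo 0 <= v)) * count (okf (fun i => lo i.+1) v) (allseqs b B).
Proof.
rewrite count_allseqsS; apply: eq_bigr => v _ /=.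
case: (t <= v); case: (lo 0 <= v) => /=; rewrite ?mul1n ?mul0n //.
by elim: (allseqs b B).
by elim: (allseqs b B).
by elim: (allseqs b B).
Qed.

Lemma count_okf_shift b : forall lo t B d, d <= maxn t (lo 0) ->
  count (okf lo t) (allseqs b (B + d)) =
  count (okf (fun i => lo i - d) (t - d)) (allseqs b B).
Proof.
elim: b => [//|b IH] lo t B d Hd.
rewrite !count_okfS.
rewrite (big_cat_nat _ (n := d)) //=; last by lia.
rewrite big1_seq; last first.
  move=> v; rewrite mem_index_iota => /andP[_ Hv].
  have -> : (t <= v) && (lo 0 <= v) = false by apply/negbTE; apply/negP => /andP[]; lia.
  by [].
rewrite add0n -{1}(add0n d) big_addn addnK.
apply: eq_bigr => v _.
rewrite IH; last by rewrite /=; lia.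
congr (_ * _).
  congr (nat_of_bool _); apply/andP/andP => [[]|[]]; split; lia.
by rewrite addnK.
Qed.

Definition cs m a b := count (okf (fun i => i.+2 - m) 0) (allseqs b a.+1).

Lemma cs0 m a : cs m a 0 = 1.
Proof. by []. Qed.

Lemma cs_rec m a b : cs m a b.+1 =
  (2 <= m) * cs m.-1 a b + (if a is a'.+1 then cs m.+1 a' b.+1 else 0).
Proof.
rewrite /cs count_okfS big_nat_recl //; congr (_ + _).
  case: (leqP 2 m) => Hm /=.
    have -> : 2 - m <= 0 by lia.
    rewrite !mul1n; apply: eq_count => s; apply: okf_ext => i; lia.
  have -> : 2 - m <= 0 = false by lia.
  by rewrite !mul0n.
case: a => [|a]; first by rewrite big_geq.
rewrite count_okfS; apply: eq_bigr => v _.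
rewrite -(addn1 a.+1) count_okf_shift /=; last by lia.
congr (_ * _).
  congr (nat_of_bool _); lia.
rewrite subn1 /=; apply: eq_count => s; apply: okf_ext => i; lia.
Qed.

Lemma cs_zero b : forall a m, 1 <= m -> a + m <= b -> cs m a b = 0.
Proof.
elim: b => [|b IHb] a m Hm Hb; first by lia.
elim: a m Hm Hb => [|a IHa] m Hm Hb; rewrite cs_rec.
  case: (leqP 2 m) => H2 /=; last by rewrite mul0n.
  by rewrite IHb //; lia.
rewrite IHa; try lia.
case: (leqP 2 m) => H2 /=; last by rewrite mul0n.
by rewrite IHb //; lia.
Qed.

Lemma cs_id b : forall a m, 1 <= m -> b <= a + m ->
  cs m a b + (if m <= b then 'C(a + b, b - m) else 0) = 'C(a + b, b).
Proof.
elim: b => [|b IHb] a m Hm Hb.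
  have -> : m <= 0 = false by lia.
  by rewrite cs0 addn0 bin0.
elim: a m Hm Hb => [|a IHa] m Hm Hb.
  rewrite cs_rec addn0 add0n binn.
  case: (leqP 2 m) => H2.
    have := IHb 0 m.-1; rewrite add0n binn => IH.
    have {IH} := IH ltac:(lia) ltac:(lia).
    case: (leqP m b.+1) => H3.
      have -> : m.-1 <= b by lia.
      have -> : b - m.-1 = 0 by lia.
      have -> : b.+1 - m = 0 by lia.
      by rewrite !bin0 mul1n; lia.
    have -> : m.-1 <= b = false by lia.
    by rewrite mul1n.
  have Em : m = 1 by lia.
  have Eb : b = 0 by lia.
  by subst; rewrite /=.
rewrite cs_rec.
have IH1 := IHa m.+1 ltac:(lia) ltac:(lia).
rewrite (_ : a.+1 + b.+1 = (a + b.+1).+1); last by lia.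
rewrite [in RHS]binS.
set X := a + b.+1 in IH1 *.
case: (leqP 2 m) => H2.
  have IH2 := IHb a.+1 m.-1 ltac:(lia) ltac:(lia).
  rewrite (_ : a.+1 + b = X) in IH2; last by rewrite /X; lia.
  rewrite mul1n.
  case: (leqP m.+1 b.+1) => H3.
    rewrite H3 in IH1.
    have H4 : m.-1 <= b by lia.
    rewrite H4 in IH2.
    have -> : m <= b.+1 by lia.
    rewrite (_ : b.+1 - m = (b - m).+1); last by lia.
    rewrite binS.
    rewrite (_ : b - m.-1 = (b - m).+1) in IH2; last by lia.
    rewrite (_ : b.+1 - m.+1 = b - m) in IH1; last by lia.
    lia.
  rewrite (_ : m.+1 <= b.+1 = false) in IH1; last by lia.
  case: (leqP m.-1 b) => H4 in IH2 *.
    have -> : m <= b.+1 by lia.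
    rewrite (_ : b.+1 - m = 0); last by lia.
    rewrite (_ : b - m.-1 = 0) in IH2; last by lia.
    rewrite !bin0 in IH2 *. lia.
  have -> : m <= b.+1 = false by lia.
  lia.
have Em : m = 1 by lia.
subst m. rewrite mul0n add0n.
rewrite subn1 /=.
rewrite /X in IH1 *.
clear IHa; clear X; case: b IHb Hb IH1 => [|b] IHb Hb IH1.
  rewrite /= !bin0 in IH1 *. lia.
have E2 : (2 <= b.+2) = true by [].
rewrite E2 in IH1.
rewrite (_ : b.+2 - 2 = b) in IH1; last by lia.
rewrite binS.
lia.
Qed.

Lemma Dtrap_cs m a b : 1 <= m -> Dtrap m a b = cs m a b.
Proof.
move=> Hm; rewrite /Dtrap.
case: (ltnP b m) => H1.
  have := cs_id b a m Hm ltac:(lia); rewrite leqNgt H1 addn0 => ->; lia.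
case: (leqP b (a + m - 1)) => H2.
  have := cs_id b a m Hm ltac:(lia); rewrite H1 => <-; lia.
by rewrite cs_zero //; lia.
Qed.

Lemma sum_flat_cons (F : seq nat -> nat) (ts : seq nat) S :
  \sum_(p <- flatten [seq [seq t :: s | s <- S] | t <- ts]) F p =
  \sum_(t <- ts) \sum_(s <- S) F (t :: s).
Proof.
elim: ts => [|t ts IH]; first by rewrite !big_nil.
by rewrite /= big_cat IH big_cons big_map.
Qed.

Lemma count_allseqs_cat y : forall L B (P : pred (seq nat)),
  count P (allseqs (y + L) B) =
  \sum_(p <- allseqs y B) count (fun q => P (p ++ q)) (allseqs L B).
Proof.
elim: y => [|y IH] L B P.
  by rewrite big_seq1 add0n; apply: eq_count.
rewrite addSn count_allseqsS /= sum_flat_cons /index_iota subn0.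
apply: eq_bigr => t _; exact: IH.
Qed.

Lemma count_sum (T : eqType) (P : pred T) s : count P s = \sum_(x <- s) (P x : nat).
Proof. by elim: s => [|x s IH]; rewrite ?big_nil ?big_cons //= IH. Qed.

Lemma sum_count_prod (S T : seq (seq nat)) (P1 P2 : pred (seq nat)) :
  \sum_(p <- S) count (fun q => P1 p && P2 q) T = count P1 S * count P2 T.
Proof.
elim: S => [|p S IH]; first by rewrite big_nil.
rewrite big_cons IH /= mulnDl; congr (_ + _).
case: (P1 p) => /=; rewrite ?mul1n ?mul0n //.
by clear IH; elim: T => //= ? ? ->.
Qed.

Lemma mem_allseqs L B s : (s \in allseqs L B) = (size s == L) && all (fun x => x < B) s.
Proof.
elim: L s => [|L IH] [|x s] //=.
  apply/negbTE/negP => /flattenP [ss /mapP [t _ ->] /mapP [s' _]] //.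
apply/idP/idP.
  move=> /flattenP [ss /mapP [t Ht ->] /mapP [s' Hs' [-> ->]]].
  move: Hs'; rewrite IH eqSS => /andP[-> ->]; rewrite andbT /=.
  by move: Ht; rewrite mem_iota.
move=> /andP [Hs /andP[Hx Ha]].
apply/flattenP; exists [seq x :: s0 | s0 <- allseqs L B].
  by apply/mapP; exists x => //; rewrite mem_iota.
by apply/mapP; exists s => //; rewrite IH -(eqSS _ L) Hs Ha.
Qed.

Lemma uniq_allseqs L B : uniq (allseqs L B).
Proof.
elim: L => [|L IH] //=.
elim: (iota 0 B) (iota_uniq 0 B) => [|t ts IHt] //= /andP[Ht Hu].
rewrite cat_uniq IHt // map_inj_uniq // ?andbT; last by move=> ? ? [].
rewrite IH /=; apply/hasPn => s /flattenP [ss /mapP [t' Ht' ->] /mapP [s' _ ->]].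
apply/mapP => [[s'' _ [E _]]]; subst t'. by rewrite Ht' in Ht.
Qed.

Lemma okf_cat lo t p q :
  okf lo t (p ++ q) = okf lo t p && okf (fun i => lo (size p + i)) (last t p) q.
Proof.
elim: p lo t => [|x p IH] lo t /=.
  by apply: okf_ext.
by rewrite IH -!andbA.
Qed.

Lemma okf_last lo t p : okf lo t p -> t <= last t p.
Proof.
elim: p lo t => [|x p IH] lo t //= /and3P[H1 _ H3].
exact: leq_trans H1 (IH _ _ H3).
Qed.

Arguments okf_last {lo t p}.

Lemma okf_all_le lo t p b : okf lo t p -> t <= b ->
  all (fun x => x <= b) p = (last t p <= b).
Proof.
elim: p lo t => [|x p IH] lo t //= /and3P[H1 _ H3] Htb.
case: (leqP x b) => Hxb /=.
  exact: IH H3 Hxb.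
apply/esym/negbTE; rewrite -ltnNge.
exact: leq_trans Hxb (okf_last H3).
Qed.

Lemma okf_nth lo t u : okf lo t u ->
  forall i, i < size u -> lo i <= nth 0 u i /\ (if i is i'.+1 then nth 0 u i' else t) <= nth 0 u i.
Proof.
elim: u lo t => [|x u IH] lo t //= /and3P[H1 H2 H3] [|i] Hi //=.
have [A B] := IH _ _ H3 i Hi.
split => //.
by case: i Hi A B.
Qed.

Arguments okf_nth {lo t u}.

Lemma okf_mono lo t u : okf lo t u -> forall i k, i <= k -> k < size u -> nth 0 u i <= nth 0 u k.
Proof.
move=> H i k; elim: k => [|k IHk]; first by case: i.
move=> Hik Hk.
case: (ltngtP i k.+1) Hik => // Hik' _.
  apply: leq_trans (IHk _ _) _ => //; first by lia.
  by have [_ ] := okf_nth H _ Hk.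
by subst.
Qed.

Lemma okf_weaken lo lo' t u : (forall i, lo' i <= lo i) -> okf lo t u -> okf lo' t u.
Proof.
elim: u lo lo' t => [|x u IH] lo lo' t //= Hl /and3P[H1 H2 H3].
rewrite H1 (leq_trans (Hl 0) H2) /=.
exact: IH _ _ _ (fun i => Hl i.+1) H3.
Qed.

Lemma okf_star u : forall j M lo t, j < size u -> lo j <= M ->
  okf (fun i => if i == j then M else lo i) t u = okf lo t u && (M <= nth 0 u j).
Proof.
elim: u => [|x u IH] j M lo t //= Hj HM.
case: j Hj HM => [|j] Hj HM /=.
  case: (leqP M x) => HMx; last by rewrite !andbF.
  rewrite (leq_trans HM HMx) !andbT.
  by [].
rewrite (@okf_ext _ (fun i => if i == j then M else lo i.+1)); last by move=> i; rewrite eqSS.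
rewrite (IH j M (fun i => lo i.+1)) //.
by rewrite !andbA.
Qed.

Definition cut K y (u : seq nat) :=
  ((y == 0) || ~~ (K <= nth 0 u y.-1 + y.-1)) && (K <= nth 0 u y + y).

Lemma tele lo t u K : okf lo t u -> forall k, k < size u ->
  \sum_(0 <= y < k.+1) (cut K y u : nat) = (K <= nth 0 u k + k).
Proof.
move=> H; elim => [|k IH] Hk.
  by rewrite big_nat1 /cut.
rewrite big_nat_recr //= IH; last by lia.
have Hm := okf_mono _ _ _ H _ _ (leqnSn k) Hk.
rewrite /cut /=.
case: (leqP K (nth 0 u k + k)) => H1 /=.
  have -> : K <= nth 0 u k.+1 + k.+1 by lia.
  by [].
by rewrite add0n.
Qed.

Lemma split_eq K y p x q : y <= K -> size p = y ->
  okf (fun i => i) 0 (p ++ x :: q) && cut K y (p ++ x :: q) =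
  (okf (fun i => i) 0 p && all (fun z => z <= K - y) p) && okf (fun i => i + y) (K - y) (x :: q).
Proof.
move=> HyK Hs.
rewrite okf_cat.
case Hp: (okf (fun i => i) 0 p); last by [].
rewrite (okf_all_le _ _ _ (K - y) Hp) // /cut.
rewrite (nth_cat 0 p (x :: q) y) Hs ltnn subnn /=.
rewrite (@okf_ext (fun i => y + i.+1) (fun i => i.+1 + y)); last by move=> i; lia.
case: (okf (fun i => i.+1 + y) x q); rewrite ?andbF ?andbT //.
case: y HyK Hs => [|y] HyK Hs.
  have -> : p = [::] by apply/eqP; rewrite -size_eq0 Hs.
  rewrite /=; lia.
rewrite /= (nth_cat 0 p (x :: q) y) Hs ltnSn.
have -> : nth 0 p y = last 0 p by rewrite -(nth_last 0) Hs.
lia.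
Qed.

Lemma main_seq N j0 M0 : j0 < N -> j0 <= M0 ->
  count (okf (fun i => if i == j0 then M0 else i) 0) (allseqs N N) =
  \sum_(0 <= y < j0.+1)
    count (fun p => okf (fun i => i) 0 p && all (fun z => z <= M0 + j0 - y) p) (allseqs y N) *
    count (okf (fun i => i + y) (M0 + j0 - y)) (allseqs (N - y) N).
Proof.
move=> HjN HjM.
set K := M0 + j0.
rewrite count_sum.
rewrite (eq_big_seq (fun u => \sum_(0 <= y < j0.+1) ((okf (fun i => i) 0 u && cut K y u) : nat))); last first.
  move=> u; rewrite mem_allseqs => /andP [/eqP Hs _].
  rewrite okf_star; last by [].
  2: by rewrite Hs.
  case Hu: (okf (fun i => i) 0 u) => /=.
    rewrite (tele _ _ _ K Hu); last by rewrite Hs.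
    congr (nat_of_bool _); rewrite /K; lia.
  by rewrite big1.
rewrite exchange_big /=; apply: eq_big_nat => y /andP[_ Hy].
rewrite -count_sum.
have HNy : N = y + (N - y) by lia.
rewrite {1}HNy count_allseqs_cat -sum_count_prod.
apply: eq_big_seq => p; rewrite mem_allseqs => /andP[/eqP Hp _].
apply: eq_in_count => q; rewrite mem_allseqs => /andP[/eqP Hq _].
case: q Hq => [|x q] Hq; first by rewrite /= in Hq; lia.
apply: split_eq => //; rewrite /K; lia.
Qed.

Definition Fh N (h : {ffun 'I_N -> 'I_N}) : seq nat := [seq (h i : nat) | i <- enum 'I_N].

Arguments Fh {N}.

Lemma Fh_inj N : injective (@Fh N).
Proof.
move=> h h' /eqP; rewrite /Fh.
move/eqP/eq_in_map => E; apply/ffunP => i; apply/val_inj.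
by apply: E; rewrite mem_enum.
Qed.

Lemma card_ffun_seq N (P : pred (seq nat)) :
  #|[pred h : {ffun 'I_N -> 'I_N} | P (Fh h)]| = count P (allseqs N N).
Proof.
rewrite cardE /enum_mem size_filter -enumT.
transitivity (count P (map Fh (enum {ffun 'I_N -> 'I_N}))); first by rewrite count_map.
apply/permP; apply: uniq_perm.
- by rewrite map_inj_uniq ?enum_uniq //; exact: Fh_inj.
- exact: uniq_allseqs.
move=> s; rewrite mem_allseqs; apply/mapP/idP.
  move=> [h _ ->]; rewrite /Fh size_map size_enum_ord eqxx /=.
  by apply/allP => x /mapP [i _ ->].
move=> /andP [/eqP Hs /(all_nthP 0) Ha].
exists ([ffun i : 'I_N => insubd i (nth 0 s i)] : {ffun 'I_N -> 'I_N}); first by rewrite mem_enum.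
rewrite /Fh.
rewrite (eq_map (g := fun i : 'I_N => nth 0 s i)); last first.
  move=> i; rewrite ffunE insubdK //; apply: Ha; rewrite Hs; exact: ltn_ord.
have -> : [seq nth 0 s i | i : 'I_N <- enum 'I_N] = map (nth 0 s) (map val (enum 'I_N)) by rewrite -map_comp.
rewrite val_enum_ord -Hs.
by rewrite -/(mkseq _ _) mkseq_nth.
Qed.

Lemma size_Fh N (h : {ffun 'I_N -> 'I_N}) : size (Fh h) = N.
Proof. by rewrite /Fh size_map size_enum_ord. Qed.

Lemma nth_Fh N (h : {ffun 'I_N -> 'I_N}) (i : 'I_N) : nth 0 (Fh h) i = h i.
Proof. by rewrite /Fh (nth_map i) ?size_enum_ord // nth_ord_enum. Qed.

Lemma okf_of_nth lo t u :
  (forall i, i < size u -> lo i <= nth 0 u i /\ (if i is i'.+1 then nth 0 u i' else t) <= nth 0 u i) ->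
  okf lo t u.
Proof.
elim: u lo t => [|x u IH] lo t //= H.
have [H1 H2] := H 0 erefl.
rewrite H1 H2 /=; apply: IH => i Hi.
have [A B] := H i.+1 Hi; split => //.
by case: i Hi A B.
Qed.

Lemma okf_Fh N (h : {ffun 'I_N -> 'I_N}) lo :
  okf lo 0 (Fh h) = [forall v : 'I_N, lo v <= h v] && [forall v1 : 'I_N, forall v2 : 'I_N, (v2 <= v1) ==> (h v2 <= h v1)].
Proof.
apply/idP/andP.
  move=> H; split.
    apply/forallP => v; have [A _] := okf_nth H v ltac:(by rewrite size_Fh).
    by rewrite nth_Fh in A.
  apply/forallP => v1; apply/forallP => v2; apply/implyP => Hle.
  have := okf_mono _ _ _ H _ _ Hle ltac:(by rewrite size_Fh); by rewrite !nth_Fh.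
move=> [/forallP H1 /forallP H2].
apply: okf_of_nth => i; rewrite size_Fh => Hi.
have E : nth 0 (Fh h) i = h (Ordinal Hi) := nth_Fh _ h (Ordinal Hi).
rewrite E; split; first exact: (H1 (Ordinal Hi)).
case: i Hi E => [|i] Hi E //.
have Hi' : i < N by lia.
have E' : nth 0 (Fh h) i = h (Ordinal Hi') := nth_Fh _ h (Ordinal Hi').
rewrite E'.
by have := H2 (Ordinal Hi) => /forallP /(_ (Ordinal Hi')) /implyP /(_ (leqnSn i)).
Qed.

Lemma mem_s n (s : nat -> nat) q e :
  (forall i j, 1 <= i <= n -> 1 <= j <= n -> s i = s j -> i = j) ->
  1 <= q <= n -> e <= n -> (s q \in map s (iota 1 e)) = (q <= e).
Proof.
move=> Hinj Hq He; apply/mapP/idP.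
  move=> [i]; rewrite mem_iota => Hi E.
  have := Hinj q i Hq ltac:(lia) E; lia.
move=> Hqe; exists q => //; rewrite mem_iota; lia.
Qed.

Definition pp ks kl k := if k == ks then kl else if (ks < k) && (k <= kl) then k.-1 else k.

Lemma all_cond n s ks kl (v e : nat) :
  (forall i j, 1 <= i <= n -> 1 <= j <= n -> s i = s j -> i = j) ->
  1 <= ks -> ks < kl -> kl <= n -> v.+2 <= n -> e.+2 <= n ->
  all (fun a => a \in leaves_below s e.+1) (leaves_below (fwd_incr s ks kl) v.+1) =
  all (fun k => pp ks kl k <= e.+2) (iota 1 v.+2).
Proof.
move=> Hinj H1 H2 H3 Hv He.
rewrite /leaves_below all_map; apply: eq_in_all => k; rewrite mem_iota => Hk.
transitivity (fwd_incr s ks kl k \in map s (iota 1 e.+2)); first by [].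
have -> : fwd_incr s ks kl k = s (pp ks kl k) by rewrite /fwd_incr /pp; case: ifP => //; case: ifP.
rewrite (mem_s _ _ _ e.+2 Hinj); [by [] | | by lia].
rewrite /pp; case: ifP => E1; first by lia.
case: ifP => E2; lia.
Qed.

Lemma hist_cond n s ks kl (h : {ffun 'I_n.-1 -> 'I_n.-1}) :
  3 <= n -> (forall i j, 1 <= i <= n -> 1 <= j <= n -> s i = s j -> i = j) ->
  1 <= ks -> ks < kl -> kl <= n ->
  is_coal_history n (fwd_incr s ks kl) s h =
  [forall v : 'I_n.-1, (if nat_of_ord v == ks + (ks == 1) - 2 then kl - 2 else nat_of_ord v) <= h v]
  && [forall v1 : 'I_n.-1, forall v2 : 'I_n.-1, (v2 <= v1) ==> (h v2 <= h v1)].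
Proof.
move=> Hn Hinj H1 H2 H3.
rewrite /is_coal_history.
case Hm: [forall v1 : 'I_n.-1, forall v2 : 'I_n.-1, (v2 <= v1) ==> (h v2 <= h v1)]; rewrite ?andbF ?andbT //.
have Hmono : forall v1 v2 : 'I_n.-1, v2 <= v1 -> h v2 <= h v1.
  by move=> v1 v2; move/forallP: Hm => /(_ v1) /forallP /(_ v2) /implyP.
have [j0 Ej0] : {j0 | j0 = ks + (ks == 1) - 2} by exists (ks + (ks == 1) - 2).
rewrite -Ej0.
have Dj0 : j0 + 2 = maxn ks 2 by rewrite Ej0; case: eqP; lia.
clear Ej0.
have Hj0 : j0 < n.-1 by lia.
apply/forallP/forallP => H v.
  have := H v; rewrite (all_cond n s ks kl v (h v) Hinj) //; last by have := ltn_ord (h v); lia.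
  2: by have := ltn_ord v; lia.
  move/allP => Hall.
  case: (boolP ((ks <= v.+2) && (v.+2 <= kl))) => Hc.
    have := Hall ks; rewrite mem_iota /pp eqxx => /(_ ltac:(lia)).
    repeat case: ifP; lia.
  have := Hall v.+2; rewrite mem_iota /pp => /(_ ltac:(lia)).
  repeat case: ifP; lia.
rewrite (all_cond n s ks kl v (h v) Hinj) //; last by have := ltn_ord (h v); lia.
2: by have := ltn_ord v; lia.
apply/allP => k; rewrite mem_iota => Hk.
have Hv := H v.
have Hj := H (Ordinal Hj0).
rewrite /= eqxx in Hj.
rewrite /pp; case: ifP => E1.
  have Hle : j0 <= v by move/eqP: E1; lia.
  have := Hmono v (Ordinal Hj0) Hle.
  move: Hv Hj; repeat case: ifP; lia.
move: Hv; repeat case: ifP; lia.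
Qed.

Lemma Dtri_Dtrap a b : Dtri a b = Dtrap 1 a b.
Proof.
rewrite /Dtri /Dtrap; case: b => [|b] //=; first by rewrite bin0.
by rewrite addnK subn1.
Qed.

Lemma count_restrict L : forall B a (P : pred (seq nat)), a < B ->
  count (fun s => P s && all (fun z => z <= a) s) (allseqs L B) = count P (allseqs L a.+1).
Proof.
elim: L => [|L IH] B a P HaB; first by rewrite /= andbT.
rewrite !count_allseqsS (big_cat_nat (n := a.+1)) //=.
rewrite [X in _ + X]big1_seq ?addn0; last first.
  move=> t /andP[_]; rewrite mem_index_iota => /andP[Ht _].
  rewrite (eq_count (a2 := pred0)) ?count_pred0 // => s /=.
  have -> : t <= a = false by lia.
  by rewrite andbF.
apply: eq_big_nat => t /andP[_ Ht].
rewrite -(IH B a (fun s => P (t :: s))) //.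
have Ht' : t <= a by lia.
by apply: eq_count => s /=; rewrite Ht'.
Qed.

Lemma factorA y N a : a < N ->
  count (fun p => okf (fun i => i) 0 p && all (fun z => z <= a) p) (allseqs y N) = Dtri a.+1 y.
Proof.
move=> HaN; rewrite count_restrict // Dtri_Dtrap Dtrap_cs // /cs.
rewrite -(addn1 a.+1) count_okf_shift //.
by apply: eq_count => s; apply: okf_ext => i; lia.
Qed.

Lemma factorB y d N m b : d < N -> 1 <= m -> (forall i, i + y - d = i.+2 - m) ->
  count (okf (fun i => i + y) d) (allseqs b N) = Dtrap m (N - 1 - d) b.
Proof.
move=> HdN Hm Hi.
rewrite Dtrap_cs // /cs.
have -> : N = (N - 1 - d).+1 + d by lia.
rewrite count_okf_shift; last by lia.
rewrite subnn (_ : (N - 1 - d).+1 + d - 1 - d = N - 1 - d); last by lia.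
by apply: eq_count => s; apply: okf_ext.
Qed.

Lemma Bzero lo d N b : N <= d -> 0 < b -> count (okf lo d) (allseqs b N) = 0.
Proof.
move=> HN; case: b => [|b] // _.
rewrite count_okfS big1_seq // => v; rewrite mem_index_iota => /andP[_ Hv].
have -> : d <= v = false by lia.
by [].
Qed.

Lemma sum_rev (F : nat -> nat) a L :
  \sum_(a <= y < a + L) F y = \sum_(0 <= c < L) F (a + L - 1 - c).
Proof.
elim: L => [|L IH]; first by rewrite addn0 !big_geq.
rewrite addnS big_nat_recr /=; last by lia.
rewrite big_nat_recl // IH addnC; congr (_ + _).
  by congr F; lia.
by apply: eq_bigr => c _; congr F; lia.
Qed.

Theorem proposition9 (n : nat) (s : nat -> nat) (ks kl : nat) :
  3 <= n ->
  (forall i j, 1 <= i <= n -> 1 <= j <= n -> s i = s j -> i = j) ->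
  1 <= ks -> ks < kl -> kl <= n -> kl != 2 ->
  let delta := (ks == 1 : nat) in
  num_coal_histories n (fwd_incr s ks kl) s =
  \sum_(0 <= c < (minn (ks + delta - 2) (n - kl)).+1)
     Dtri (kl - 1 + c) (ks + delta - 2 - c) *
     Dtrap (kl - ks - delta + 2 + 2 * c) (n - kl - c) (n - ks + 1 - delta + c).
Proof.
move=> Hn Hinj Hks Hkl Hkln _ delta.
rewrite /num_coal_histories.
rewrite (eq_card (B := [pred h : {ffun 'I_n.-1 -> 'I_n.-1} |
   okf (fun i => if i == ks + delta - 2 then kl - 2 else i) 0 (Fh h)])); last first.
  by move=> h; rewrite !inE hist_cond // okf_Fh.
rewrite card_ffun_seq.
have Hd1 : delta <= 1 by rewrite /delta; case: eqP.
have Hd2 : 2 <= ks + delta by rewrite /delta; case: eqP; lia.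
move: Hd1 Hd2; clearbody delta => Hd1 Hd2.
have [j0 Ej0] : {j0 | j0 = ks + delta - 2} by exists (ks + delta - 2).
rewrite -Ej0.
rewrite main_seq; [|lia|lia].
set L := (minn j0 (n - kl)).+1.
rewrite (big_cat_nat (n := j0.+1 - L)) //=; last by lia.
rewrite big1_seq ?add0n; last first.
  move=> y /andP[_]; rewrite mem_index_iota => /andP[_ Hy].
  by rewrite Bzero ?muln0 //; rewrite /L in Hy; lia.
set a := j0.+1 - L.
have Ea : j0.+1 = a + L by rewrite /a /L; lia.
rewrite Ea sum_rev.
apply: eq_big_nat => c /andP[_ Hc].
have -> : a + L - 1 - c = j0 - c by rewrite /a /L; lia.
rewrite factorA; last by rewrite /L in Hc; lia.
rewrite (factorB (j0 - c) (kl - 2 + j0 - (j0 - c)) n.-1 (kl - ks - delta + 2 + 2 * c)); [|rewrite /L in Hc; lia|lia|move=> i; lia].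
congr (Dtri _ _ * Dtrap _ _ _); rewrite /L in Hc; lia.
Qed.
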